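(* Let $S$ be a monoid such that the word $xy$ ($x\ne y$) is an isoterm for $S$. Suppose that $S$ satisfies an identity $\mathbf u\approx\mathbf v$ and that there are a substitution $\Theta:\mathfrak A\to\mathfrak A^+$ and a variable $x$ that occurs exactly twice in both $\mathbf U=\Theta(\mathbf u)$ and $\mathbf V=\Theta(\mathbf v)$. Then $l_{\mathbf u,\mathbf v}(\Theta^{-1}_{\mathbf u}({}_{1\mathbf U}x))=\Theta^{-1}_{\mathbf v}({}_{1\mathbf V}x)$ and $l_{\mathbf u,\mathbf v}(\Theta^{-1}_{\mathbf u}({}_{2\mathbf U}x))=\Theta^{-1}_{\mathbf v}({}_{2\mathbf V}x)$.
   Context: $\mathfrak A$ is a countably infinite alphabet of variables; words are elements of $\mathfrak A^+$; a substitution is a homomorphism $\Theta:\mathfrak A^+\to\mathfrak A^+$. A monoid $S$ satisfies $\mathbf u\approx\mathbf v$ if both sides agree under all evaluations in $S$; a word is an isoterm for $S$ if it forms no nontrivial identity of $S$. ${}_{i\mathbf w}z$ denotes the $i$-th occurrence of $z$ in $\mathbf w$, and $\mathrm{occ}_{\mathbf w}(z)$ the number of occurrences. $l_{\mathbf u,\mathbf v}$ is the map ${}_{i\mathbf u}z\mapsto{}_{i\mathbf v}z$ for $i\le\min(\mathrm{occ}_{\mathbf u}(z),\mathrm{occ}_{\mathbf v}(z))$. If $\mathbf u=a_1\cdots a_k$ (letters) and $\mathbf U=\Theta(\mathbf u)=\Theta(a_1)\cdots\Theta(a_k)$, then each occurrence $c$ of a variable in $\mathbf U$ lies in a unique block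 $\Theta(a_j)$; $\Theta^{-1}_{\mathbf u}(c)$ is defined as the occurrence in $\mathbf u$ given by the $j$-th letter $a_j$. *)

(* Defs.v *)
(* Variables of the alphabet A are natural numbers (countably
   infinite); a word is a nonempty  seq nat . *)
From mathcomp Require Import all_boot.
Set Implicit Arguments. Unset Strict Implicit. Unset Printing Implicit Defensive.

Definition word := seq nat.

Record is_monoid (T : Type) (mul : T -> T -> T) (one : T) : Prop := {
  mon_assoc : forall a b c, mul a (mul b c) = mul (mul a b) c;
  mon_mul1 : forall a, mul one a = a;
  mon_mul0 : forall a, mul a one = a }.

Definition eval_word (T : Type) (mul : T -> T -> T) (one : T)
  (phi : nat -> T) (w : word) : T :=
  foldr (fun a acc => mul (phi a) acc) one w.

Definition satisfies (T : Type) (mul : T -> T -> T) (one : T) (u v : word) : Prop :=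
  forall phi : nat -> T, eval_word mul one phi u = eval_word mul one phi v.

(* w is an isoterm for S: S satisfies no nontrivial identity w ~ w'
   (w' ranging over words, i.e. nonempty sequences). *)
Definition isoterm (T : Type) (mul : T -> T -> T) (one : T) (w : word) : Prop :=
  forall w' : word, 0 < size w' -> satisfies mul one w w' -> w' = w.

Definition subst (Th : nat -> word) (u : word) : word := flatten (map Th u).

(* Occurrences are pairs (z, i) standing for the i-th occurrence (1-based)
   of the variable z. *)
Definition occurrence := (nat * nat)%type.

(* 0-based position in w of the i-th occurrence of z (meaningful when
   1 <= i <= count_mem z w). *)
Fixpoint pos_occ (w : word) (z i : nat) : nat :=
  match w with
  | [::] => 0
  | a :: w' => if a == z then (if i == 1 then 0 else (pos_occ w' z i.-1).+1)
               else (pos_occ w' z i).+1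
  end.

Definition occ_of_pos (w : word) (j : nat) : occurrence :=
  let z := nth 0 w j in (z, count_mem z (take j.+1 w)).

Fixpoint block_idx (Th : nat -> word) (u : word) (p : nat) : nat :=
  match u with
  | [::] => 0
  | a :: u' => if p < size (Th a) then 0 else (block_idx Th u' (p - size (Th a))).+1
  end.

Definition theta_inv (Th : nat -> word) (u : word) (c : occurrence) : occurrence :=
  occ_of_pos u (block_idx Th u (pos_occ (subst Th u) c.1 c.2)).

Definition l_map (u v : word) (c : occurrence) : option occurrence :=
  if (0 < c.2) && (c.2 <= minn (count_mem c.1 u) (count_mem c.1 v))
  then Some c else None.

(* Main.v *)
Require Import Defs.
From mathcomp Require Import all_boot zify.

Lemma cntC (x c : nat) (w : seq nat) :
  count_mem x (c :: w) = (c == x) + count_mem x w.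
Proof. by []. Qed.

Lemma pos_occ_catR (x : nat) (w1 w2 : word) (j : nat) :
  0 < j -> count_mem x w1 < j ->
  pos_occ (w1 ++ w2) x j = size w1 + pos_occ w2 x (j - count_mem x w1).
Proof.
elim: w1 j => [|c w1 IH] j hj hc /=; first by rewrite subn0.
case: (c =P x) => [E|hne].
  subst c.
  have hc' : (count_mem x w1).+1 < j by move: hc; rewrite cntC eqxx.
  clear hc; case: j hj hc' => [|[|j]] hj hc'; [lia|lia|].
  rewrite /= IH; [|lia|lia].
  have -> : j.+2 - (true + count_mem x w1) = j.+1 - count_mem x w1 by rewrite /=; lia.
  by rewrite addSn.
have hc' : count_mem x w1 < j.
  by move: hc; rewrite cntC (introF eqP hne).
by rewrite IH // addSn.
Qed.

Lemma pos_occ_catL (x : nat) (w1 w2 : word) (j : nat) :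
  0 < j -> j <= count_mem x w1 -> pos_occ (w1 ++ w2) x j < size w1.
Proof.
elim: w1 j => [|c w1 IH] j hj hc /=; first by move: hc; rewrite /=; lia.
case: (c =P x) => [E|hne].
  subst c.
  have hc' : j <= (count_mem x w1).+1 by move: hc; rewrite cntC eqxx.
  clear hc.
  case: j hj hc' => [|[|j]] hj hc' //=.
  rewrite ltnS; apply: IH; lia.
have hc' : j <= count_mem x w1.
  by move: hc; rewrite cntC (introF eqP hne).
by rewrite ltnS; apply: IH.
Qed.

Lemma subst_cat (Th : nat -> word) (w1 w2 : word) :
  subst Th (w1 ++ w2) = subst Th w1 ++ subst Th w2.
Proof. by rewrite /subst map_cat flatten_cat. Qed.

Lemma subst_cons (Th : nat -> word) (a : nat) (w : word) :
  subst Th (a :: w) = Th a ++ subst Th w.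
Proof. by []. Qed.

Lemma block_idx_cat (Th : nat -> word) (u1 w : word) (q : nat) :
  block_idx Th (u1 ++ w) (size (subst Th u1) + q) = size u1 + block_idx Th w q.
Proof.
elim: u1 => [|c u1 IH] //=.
rewrite subst_cons size_cat.
have -> : (size (Th c) + size (subst Th u1) + q < size (Th c)) = false by lia.
by rewrite -addnA addKn IH.
Qed.

Lemma theta_inv_char (Th : nat -> word) (u1 u2 : word) (t x i : nat) :
  count_mem x (subst Th u1) < i <= count_mem x (subst Th u1) + count_mem x (Th t) ->
  theta_inv Th (u1 ++ t :: u2) (x, i) = (t, (count_mem t u1).+1).
Proof.
move=> /andP [h1 h2].
rewrite /theta_inv /= subst_cat subst_cons pos_occ_catR; [|lia|lia].
rewrite block_idx_cat /=.
have -> : pos_occ (Th t ++ subst Th u2) x (i - count_mem x (subst Th u1)) < size (Th t).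
  by apply: pos_occ_catL; lia.
rewrite addn0 /occ_of_pos nth_cat ltnn subnn /=.
rewrite take_cat ltnNge leqnSn /= subSnn /= take0 count_cat cntC eqxx /=.
by rewrite addn1.
Qed.

Lemma K_cat (Th : nat -> word) (x : nat) (w1 w2 : word) :
  count_mem x (subst Th (w1 ++ w2)) = count_mem x (subst Th w1) + count_mem x (subst Th w2).
Proof. by rewrite subst_cat count_cat. Qed.

Lemma K_cons (Th : nat -> word) (x c : nat) (w : word) :
  count_mem x (subst Th (c :: w)) = count_mem x (Th c) + count_mem x (subst Th w).
Proof. by rewrite subst_cons count_cat. Qed.

Lemma K_ge1 (Th : nat -> word) (x p : nat) (w : word) :
  count_mem p w * count_mem x (Th p) <= count_mem x (subst Th w).
Proof.
elim: w => [|c w IH] //.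
rewrite K_cons cntC.
case: (c =P p) => [E|hne]; [subst c|]; rewrite mulnDl; lia.
Qed.

Lemma K_ge2 (Th : nat -> word) (x p q : nat) (w : word) : p <> q ->
  count_mem p w * count_mem x (Th p) + count_mem q w * count_mem x (Th q)
    <= count_mem x (subst Th w).
Proof.
move=> hpq; elim: w => [|c w IH] //.
rewrite K_cons !cntC.
case: (c =P p) => [E|hne].
  subst c; rewrite (introF eqP hpq) !mulnDl; lia.
case: (c =P q) => [E|hne']; [subst c|]; rewrite !mulnDl; lia.
Qed.

Lemma Kpos (Th : nat -> word) (x : nat) (w : word) : 0 < count_mem x (subst Th w) ->
  exists s, s \in w /\ 0 < count_mem x (Th s).
Proof.
elim: w => [|c w IH] //.
rewrite K_cons => h.
case: (posnP (count_mem x (Th c))) => hc.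
  have [s [hs hs']] : exists s, s \in w /\ 0 < count_mem x (Th s) by apply: IH; lia.
  by exists s; rewrite in_cons hs orbT.
by exists c; rewrite in_cons eqxx.
Qed.

Lemma split_cnt (z : nat) (w : word) (n : nat) : n < count_mem z w ->
  exists w1 w2, w = w1 ++ z :: w2 /\ count_mem z w1 = n.
Proof.
elim: w n => [|c w IH] n //.
rewrite cntC.
case: (c =P z) => [->|hne] /= h.
  case: n h => [|n] h.
    by exists [::], w.
  have [w1 [w2 [-> h2]]] : exists w1 w2, w = w1 ++ z :: w2 /\ count_mem z w1 = n.
    by apply: IH.
  by exists (z :: w1), w2; rewrite cntC eqxx h2.
have [w1 [w2 [-> h2]]] : exists w1 w2, w = w1 ++ z :: w2 /\ count_mem z w1 = n.
  by apply: IH.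
by exists (c :: w1), w2; rewrite cntC (introF eqP hne) h2.
Qed.

Lemma decomp (Th : nat -> word) (x : nat) (w : word) (i : nat) :
  0 < i <= count_mem x (subst Th w) ->
  exists w1 t w2, w = w1 ++ t :: w2 /\
    count_mem x (subst Th w1) < i <= count_mem x (subst Th w1) + count_mem x (Th t).
Proof.
elim: w i => [|c w IH] i /=; first by move=> /andP[]; rewrite /=; lia.
rewrite K_cons => /andP [h1 h2].
case: (leqP i (count_mem x (Th c))) => hi.
  by exists [::], c, w; rewrite /= h1 hi.
have [w1 [t [w2 [-> h]]]] : exists w1 t w2, w = w1 ++ t :: w2 /\
    count_mem x (subst Th w1) < i - count_mem x (Th c) <=
      count_mem x (subst Th w1) + count_mem x (Th t).
  apply: IH; apply/andP; split; lia.
exists (c :: w1), t, w2; split; first by [].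
rewrite K_cons.
move: h => /andP [h3 h4].
set kt := count_mem x (Th t) in h4 *.
apply/andP; split; lia.
Qed.
Set Implicit Arguments. Unset Strict Implicit.

Lemma eval_cat (T : Type) (mul : T -> T -> T) (one : T) (HS : is_monoid mul one)
  (phi : nat -> T) (w1 w2 : word) :
  eval_word mul one phi (w1 ++ w2) = mul (eval_word mul one phi w1) (eval_word mul one phi w2).
Proof.
elim: w1 => [|c w1 IH] /=; first by rewrite (mon_mul1 HS).
by rewrite /eval_word /= -/(eval_word mul one phi (w1 ++ w2)) IH (mon_assoc HS).
Qed.

Lemma eval_nseq (T : Type) (mul : T -> T -> T) (one : T)
  (phi : nat -> T) (n a : nat) (w : word) :
  eval_word mul one phi (nseq n a ++ w) = iter n (mul (phi a)) (eval_word mul one phi w).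
Proof. by elim: n => [|n IH] //=; rewrite -IH. Qed.

Lemma eval_one (T : Type) (mul : T -> T -> T) (one : T) (HS : is_monoid mul one)
  (phi : nat -> T) (w : word) :
  (forall t, t \in w -> phi t = one) -> eval_word mul one phi w = one.
Proof.
elim: w => [|c w IH] //= h.
rewrite /eval_word /= -/(eval_word mul one phi w) IH; last first.
  by move=> t ht; apply: h; rewrite in_cons ht orbT.
by rewrite h ?in_cons ?eqxx // (mon_mul1 HS).
Qed.

Lemma eval_single (T : Type) (mul : T -> T -> T) (one : T) (HS : is_monoid mul one)
  (g : T) (z : nat) (w : word) :
  eval_word mul one (fun t => if t == z then g else one) w = iter (count_mem z w) (mul g) one.
Proof.
elim: w => [|c w IH] //.
rewrite /eval_word /= -/(eval_word mul one _ w) IH.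
by case: (c =P z) => [_|_] /=; rewrite ?(mon_mul1 HS).
Qed.

Lemma iter_mul (T : Type) (mul : T -> T -> T) (one : T) (HS : is_monoid mul one)
  (g y : T) (m : nat) : mul (iter m (mul g) one) y = iter m (mul g) y.
Proof.
elim: m => [|m IH] /=; first by rewrite (mon_mul1 HS).
by rewrite -(mon_assoc HS) IH.
Qed.

Lemma sym_sat (T : Type) (mul : T -> T -> T) (one : T) (u v : word) :
  satisfies mul one u v -> satisfies mul one v u.
Proof. by move=> h phi; rewrite h. Qed.

Lemma cnt_le1 (T : Type) (mul : T -> T -> T) (one : T) (HS : is_monoid mul one)
  (a b : nat) (hab : a <> b) (Hiso : isoterm mul one [:: a; b])
  (u v : word) (Huv : satisfies mul one u v) (z : nat) :
  count_mem z u <= 1 -> count_mem z v = count_mem z u.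
Proof.
move=> hle.
have G : forall g y, iter (count_mem z u) (mul g) y = iter (count_mem z v) (mul g) y.
  move=> g y.
  have := Huv (fun t => if t == z then g else one).
  rewrite !(eval_single HS) => E.
  by rewrite -(iter_mul HS g y (count_mem z u)) -(iter_mul HS g y (count_mem z v)) E.
set m := count_mem z u in hle G *; set n := count_mem z v in G *.
case: m hle G => [|[|m]] // _ G.
  have h := Hiso (nseq n.+1 a ++ [:: b]).
  have : nseq n.+1 a ++ [:: b] = [:: a; b].
    apply: h; first by rewrite size_cat.
    move=> psi.
    change [:: a; b] with (nseq 1 a ++ [:: b]).
    by rewrite !eval_nseq /= -G.
  by move/(congr1 size); rewrite size_cat size_nseq /= => E; lia.
have h := Hiso (nseq n a ++ [:: b]).
have : nseq n a ++ [:: b] = [:: a; b].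
  apply: h; first by rewrite size_cat /= addn1.
  move=> psi.
  change [:: a; b] with (nseq 1 a ++ [:: b]).
  by rewrite !eval_nseq -G.
by move/(congr1 size); rewrite size_cat size_nseq /= => E; lia.
Qed.

Lemma eval_cons (T : Type) (mul : T -> T -> T) (one : T) (phi : nat -> T) (c : nat) (w : word) :
  eval_word mul one phi (c :: w) = mul (phi c) (eval_word mul one phi w).
Proof. by []. Qed.

Lemma eval_pq (T : Type) (mul : T -> T -> T) (one : T) (HS : is_monoid mul one)
  (phi : nat -> T) (p q : nat) (hpq : p <> q)
  (ho : forall t, t != p -> t != q -> phi t = one) (w1 w2 : word) :
  count_mem p (w1 ++ p :: w2) = 1 -> count_mem q (w1 ++ p :: w2) = 1 -> q \notin w1 ->
  eval_word mul one phi (w1 ++ p :: w2) = mul (phi p) (phi q).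
Proof.
move=> cp cq nq1.
rewrite count_cat cntC eqxx in cp.
rewrite count_cat cntC (introF eqP hpq) in cq.
have /count_memPn p1 : count_mem p w1 = 0 by move: cp; lia.
have /count_memPn p2 : count_mem p w2 = 0 by move: cp; lia.
have q1 : count_mem q w1 = 0 by apply/count_memPn.
have q2 : 0 < count_mem q w2 by move: cq; lia.
have [w21 [w22 [E q21]]] := @split_cnt q w2 0 q2.
subst w2.
move: p2 cq; rewrite mem_cat in_cons negb_or negb_or => /and3P [p21 pq p22].
rewrite count_cat cntC eqxx q1 q21 => cq.
have /count_memPn q22 : count_mem q w22 = 0 by lia.
have one_w : forall w, p \notin w -> q \notin w -> eval_word mul one phi w = one.
  move=> w hp hq; apply: (eval_one HS) => t ht; apply: ho.
    by apply: contraNneq hp => <-.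
  by apply: contraNneq hq => <-.
rewrite (eval_cat HS) eval_cons (eval_cat HS) eval_cons.
have q21' : q \notin w21 by apply/count_memPn.
rewrite (one_w w1) // (one_w w21) // (one_w w22) //.
by rewrite (mon_mul1 HS) (mon_mul1 HS) !(mon_mul0 HS).
Qed.

Lemma order_contra (T : Type) (mul : T -> T -> T) (one : T) (HS : is_monoid mul one)
  (a b : nat) (hab : a <> b) (Hiso : isoterm mul one [:: a; b])
  (p q : nat) (hpq : p <> q) (u1 u2 v1 v2 : word) :
  satisfies mul one (u1 ++ p :: u2) (v1 ++ q :: v2) ->
  count_mem p (u1 ++ p :: u2) = 1 -> count_mem q (u1 ++ p :: u2) = 1 ->
  count_mem p (v1 ++ q :: v2) = 1 -> count_mem q (v1 ++ q :: v2) = 1 ->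
  q \notin u1 -> p \notin v1 -> False.
Proof.
move=> H cpu cqu cpv cqv qu pv.
have : [:: b; a] = [:: a; b].
  apply: Hiso => // psi.
  pose phi := fun t => if t == p then psi a else if t == q then psi b else one.
  have ho : forall t, t != p -> t != q -> phi t = one.
    by move=> t h1 h2; rewrite /phi (negbTE h1) (negbTE h2).
  have := H phi.
  rewrite (eval_pq HS hpq ho) //.
  have hqp : q <> p by move=> e; apply: hpq.
  have ho' : forall t, t != q -> t != p -> phi t = one by move=> t h1 h2; apply: ho.
  rewrite (eval_pq HS hqp ho') //.
  have pp : phi p = psi a by rewrite /phi eqxx.
  have pq : phi q = psi b by rewrite /phi (introF eqP hqp) eqxx.
  rewrite pp pq => E.
  by rewrite !eval_cons /= !(mon_mul0 HS).
by case=> e; apply: hab.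
Qed.

Lemma memcnt (z : nat) (s : seq nat) : z \in s -> 0 < count_mem z s.
Proof. by move=> h; rewrite lt0n; apply/eqP => /count_memPn; rewrite h. Qed.

Lemma eqc (T : Type) (mul : T -> T -> T) (one : T) (HS : is_monoid mul one)
  (a b : nat) (hab : a <> b) (Hiso : isoterm mul one [:: a; b])
  (u v : word) (Huv : satisfies mul one u v) (Th : nat -> word) (x : nat)
  (HU : count_mem x (subst Th u) = 2) (HV : count_mem x (subst Th v) = 2) (z : nat) :
  0 < count_mem x (Th z) -> count_mem z u = count_mem z v.
Proof.
move=> hk.
have g1 := K_ge1 Th x z u; have g2 := K_ge1 Th x z v.
rewrite HU in g1; rewrite HV in g2.
have c1 := @cnt_le1 T mul one HS a b hab Hiso u v Huv z.
have c2 := @cnt_le1 T mul one HS a b hab Hiso v u (sym_sat Huv) z.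
case: (leqP (count_mem z u) 1) => h1; first by rewrite c1.
case: (leqP (count_mem z v) 1) => h2; first by rewrite c2.
nia.
Qed.

Lemma cross (T : Type) (mul : T -> T -> T) (one : T) (HS : is_monoid mul one)
  (a b : nat) (hab : a <> b) (Hiso : isoterm mul one [:: a; b])
  (u v : word) (Huv : satisfies mul one u v) (Th : nat -> word) (x : nat)
  (HU : count_mem x (subst Th u) = 2) (HV : count_mem x (subst Th v) = 2)
  (EQC : forall z, 0 < count_mem x (Th z) -> count_mem z u = count_mem z v)
  (t s : nat) (u1 u2 v1 v2 : word) :
  u = u1 ++ t :: u2 -> v = v1 ++ t :: v2 -> t \notin u1 -> t \notin v1 ->
  s \in v1 -> 0 < count_mem x (Th s) -> s \notin u1 -> 0 < count_mem x (Th t) -> False.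
Proof.
move=> Eu Ev tu1 tv1 sv1 ks su1 kt.
have hst : s <> t by move=> e; subst s; rewrite sv1 in tv1.
have g := K_ge2 Th x s t v hst. rewrite HV in g.
have cs : 0 < count_mem s v.
  by rewrite Ev count_cat; have := memcnt sv1; lia.
have ct : 0 < count_mem t v by rewrite Ev count_cat cntC eqxx; lia.
have csv : count_mem s v = 1 by nia.
have ctv : count_mem t v = 1 by nia.
have csu := EQC s ks; have ctu := EQC t kt.
have [v11 [v12 [Ev1 c11]]] := split_cnt s v1 0 (memcnt sv1).
have Ev' : v = v11 ++ s :: (v12 ++ t :: v2) by rewrite Ev Ev1 -catA.
have hts : t <> s by move=> e; apply: hst.
apply: (@order_contra T mul one HS a b hab Hiso t s hts u1 u2 v11 (v12 ++ t :: v2));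
  rewrite -?Eu -?Ev' //; try lia.
by move: tv1; rewrite Ev1 mem_cat negb_or => /andP [].
Qed.

Lemma sameK (T : Type) (mul : T -> T -> T) (one : T) (HS : is_monoid mul one)
  (a b : nat) (hab : a <> b) (Hiso : isoterm mul one [:: a; b])
  (u v : word) (Huv : satisfies mul one u v) (Th : nat -> word) (x : nat)
  (HU : count_mem x (subst Th u) = 2) (HV : count_mem x (subst Th v) = 2)
  (t : nat) (u1 u2 v1 v2 : word) :
  u = u1 ++ t :: u2 -> v = v1 ++ t :: v2 -> 0 < count_mem x (Th t) ->
  count_mem t u1 = count_mem t v1 ->
  count_mem x (subst Th u1) = count_mem x (subst Th v1).
Proof.
move=> Eu Ev kt cc.
have EQC := eqc HS hab Hiso Huv HU HV.
have EQC' : forall z, 0 < count_mem x (Th z) -> count_mem z v = count_mem z u.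
  by move=> z hz; rewrite EQC.
have Ku := HU; rewrite Eu K_cat K_cons in Ku.
have Kv := HV; rewrite Ev K_cat K_cons in Kv.
have g1 := K_ge1 Th x t u1; have g2 := K_ge1 Th x t v1.
case: (posnP (count_mem t u1)) => hn.
- have tu1 : t \notin u1 by apply/count_memPn.
  have tv1 : t \notin v1 by apply/count_memPn; lia.
  case: (posnP (count_mem x (subst Th u1))) => h1;
  case: (posnP (count_mem x (subst Th v1))) => h2; try lia.
  + have [s [sv1 ks]] := Kpos Th x v1 h2.
    exfalso; apply: (cross HS hab Hiso Huv HU HV EQC Eu Ev tu1 tv1 sv1 ks _ kt).
    apply/count_memPn; have := K_ge1 Th x s u1; nia.
  + have [s [su1 ks]] := Kpos Th x u1 h1.
    exfalso; apply: (cross HS hab Hiso (sym_sat Huv) HV HU EQC' Ev Eu tv1 tu1 su1 ks _ kt).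
    apply/count_memPn; have := K_ge1 Th x s v1; nia.
- nia.
Qed.

Lemma one_occ (T : Type) (mul : T -> T -> T) (one : T) (HS : is_monoid mul one)
  (a b : nat) (hab : a <> b) (Hiso : isoterm mul one [:: a; b])
  (u v : word) (Huv : satisfies mul one u v) (Th : nat -> word) (x : nat)
  (HU : count_mem x (subst Th u) = 2) (HV : count_mem x (subst Th v) = 2) (i : nat) :
  0 < i <= 2 ->
  l_map u v (theta_inv Th u (x, i)) = Some (theta_inv Th v (x, i)).
Proof.
move=> hi.
have EQC := eqc HS hab Hiso Huv HU HV.
have [u1 [t [u2 [Eu hd]]]] := decomp Th x u i ltac:(by rewrite HU).
have kt : 0 < count_mem x (Th t) by move: hd => /andP [h1 h2]; lia.
have ctu := EQC t kt.
have ctu' : count_mem t u = count_mem t u1 + (count_mem t u2).+1.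
  by rewrite Eu count_cat cntC eqxx; lia.
have [v1 [v2 [Ev cv]]] := split_cnt t v (count_mem t u1) ltac:(lia).
have KK := sameK HS hab Hiso Huv HU HV Eu Ev kt (esym cv).
rewrite Eu (theta_inv_char Th u1 u2 t x i hd) -Eu.
rewrite Ev (theta_inv_char Th v1 v2 t x i); last by rewrite -KK.
rewrite -Ev cv /l_map /=.
have h1 : count_mem t u1 < count_mem t u by lia.
have h2 : count_mem t u1 < count_mem t v by lia.
by rewrite leq_min h1 h2.
Qed.

Theorem lemma4p3 (T : Type) (mul : T -> T -> T) (one : T)
  (HS : is_monoid mul one)
  (a b : nat) (hab : a <> b) (Hiso : isoterm mul one [:: a; b])
  (u v : word) (hu : 0 < size u) (hv : 0 < size v)
  (Huv : satisfies mul one u v)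
  (Th : nat -> word) (HTh : forall y, 0 < size (Th y))
  (x : nat)
  (HU : count_mem x (subst Th u) = 2) (HV : count_mem x (subst Th v) = 2) :
  l_map u v (theta_inv Th u (x, 1)) = Some (theta_inv Th v (x, 1)) /\
  l_map u v (theta_inv Th u (x, 2)) = Some (theta_inv Th v (x, 2)).
Proof.
by split; apply: (one_occ HS hab Hiso Huv HU HV).
Qed.
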